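(* If $G$ is a finitely generated nilpotent group, then there is a polynomial $p$ such that for every $n\in\mathbb{N}$, every element of $G^{\omega,n}$ satisfies a recurrence of order $p(n)$.
   Context: $G^\omega$ is the group of all functions $f\colon\mathbb{N}\to G$ under pointwise multiplication. $f$ has period at most $n$ if there is $1\le q\le n$ with $f(t)=f(t+q)$ for all $t\ge0$. $G^{\omega,n}$ is the subgroup of $G^\omega$ generated by all elements of period at most $n$. The shift $\rho\colon G^\omega\to G^\omega$ is $(\rho(f))(t)=f(t+1)$. For a subgroup $K\le G^\omega$, $K^{(n)}$ is the smallest subgroup of $G^\omega$ containing $\rho^0(K),\rho^1(K),\ldots,\rho^n(K)$. A function $f\in G^\omega$ satisfies a recurrence of order $d\ge1$ if $\rho^d(f)\in\langle f\rangle^{(d-1)}$. *)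

(* Defs.v *)
From Stdlib Require Import List.
From mathcomp Require Import all_boot all_algebra.
Set Implicit Arguments. Unset Strict Implicit. Unset Printing Implicit Defensive.

Record grp := Grp {
  gcar :> Type;
  gmul : gcar -> gcar -> gcar;
  gone : gcar;
  ginv : gcar -> gcar;
  gmulA : forall x y z, gmul x (gmul y z) = gmul (gmul x y) z;
  gmul1 : forall x, gmul gone x = x;
  gmulV : forall x, gmul (ginv x) x = gone
}.

Definition is_subgrp {T : Type} (m : T -> T -> T) (e : T) (i : T -> T)
  (H : T -> Prop) : Prop :=
  H e /\ (forall x y, H x -> H y -> H (m x y)) /\ (forall x, H x -> H (i x)).

Definition gen {T : Type} (m : T -> T -> T) (e : T) (i : T -> T)
  (S : T -> Prop) : T -> Prop :=
  fun x => forall H, is_subgrp m e i H -> (forall y, S y -> H y) -> H x.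

Section G.
Variable G : grp.

Definition ggen (S : G -> Prop) := gen (@gmul G) (gone G) (@ginv G) S.

Definition finitely_generated : Prop :=
  exists s : seq G, forall x : G, ggen (fun y => In y s) x.

Definition gcomm (x y : G) : G :=
  gmul (gmul (ginv x) (ginv y)) (gmul x y).

Fixpoint lcs (k : nat) : G -> Prop :=
  match k with
  | 0 => fun _ => True
  | k.+1 => ggen (fun z => exists x y, lcs k x /\ z = gcomm x y)
  end.

Definition nilpotent : Prop := exists c, forall x, lcs c x -> x = gone G.

Definition smul (f g : nat -> G) : nat -> G := fun t => gmul (f t) (g t).
Definition sone : nat -> G := fun _ => gone G.
Definition sinv (f : nat -> G) : nat -> G := fun t => ginv (f t).

Definition sgen (S : (nat -> G) -> Prop) := gen smul sone sinv S.

Definition period_at_most (n : nat) (f : nat -> G) : Prop :=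
  exists q, (1 <= q <= n)%N /\ forall t, f t = f (t + q)%N.

Definition Gomega (n : nat) : (nat -> G) -> Prop := sgen (period_at_most n).

Definition shift (f : nat -> G) : nat -> G := fun t => f t.+1.

Definition Kup (K : (nat -> G) -> Prop) (n : nat) : (nat -> G) -> Prop :=
  sgen (fun h => exists i, (i <= n)%N /\ exists f, K f /\ h = iter i shift f).

Definition cyc (f : nat -> G) : (nat -> G) -> Prop := sgen (fun h => h = f).

Definition satisfies_recurrence (d : nat) (f : nat -> G) : Prop :=
  (1 <= d)%N /\ Kup (cyc f) d.-1 (iter d shift f).

End G.

(* Main.v *)
Require Import Defs.
From mathcomp Require Import all_boot all_algebra.
From Stdlib Require Import FunctionalExtensionality.
From mathcomp Require Import zify.
Set Implicit Arguments. Unset Strict Implicit. Unset Printing Implicit Defensive.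

Lemma mulgV (T : grp) (x : T) : gmul x (ginv x) = gone T.
Proof.
rewrite -[gmul x (ginv x)]gmul1 -{1}(gmulV (ginv x)) -gmulA (gmulA (ginv x) x).
by rewrite gmulV gmul1 gmulV.
Qed.

Lemma mulg1 (T : grp) (x : T) : gmul x (gone T) = x.
Proof. by rewrite -(gmulV x) gmulA mulgV gmul1. Qed.

Lemma mulKg (T : grp) (x y : T) : gmul (ginv x) (gmul x y) = y.
Proof. by rewrite gmulA gmulV gmul1. Qed.

Lemma mulKVg (T : grp) (x y : T) : gmul x (gmul (ginv x) y) = y.
Proof. by rewrite gmulA mulgV gmul1. Qed.

Lemma inv_uniq (T : grp) (x y : T) : gmul x y = gone T -> ginv x = y.
Proof. by move=> h; rewrite -[ginv x]mulg1 -h mulKg. Qed.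

Lemma invgK (T : grp) (x : T) : ginv (ginv x) = x.
Proof. by apply: inv_uniq; rewrite gmulV. Qed.

Lemma inv1 (T : grp) : ginv (gone T) = gone T.
Proof. by apply: inv_uniq; rewrite gmul1. Qed.

Lemma invM (T : grp) (x y : T) : ginv (gmul x y) = gmul (ginv y) (ginv x).
Proof. by apply: inv_uniq; rewrite -gmulA (gmulA y) mulgV gmul1 mulgV. Qed.

Definition tgen (T : grp) (S : T -> Prop) := gen (@gmul T) (gone T) (@ginv T) S.

Lemma tgen_subgrp (T : grp) (S : T -> Prop) : is_subgrp (@gmul T) (gone T) (@ginv T) (tgen S).
Proof.
split; [|split].
- by move=> H [? _] _.
- by move=> x y hx hy H hH hS; case: (hH) => _ [hm _]; apply: hm; [apply: hx|apply: hy].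
- by move=> x hx H hH hS; case: (hH) => _ [_ hi]; apply: hi; apply: hx.
Qed.

Lemma tgen1 (T : grp) (S : T -> Prop) : tgen S (gone T).
Proof. by case: (tgen_subgrp S). Qed.
Lemma tgenM (T : grp) (S : T -> Prop) x y : tgen S x -> tgen S y -> tgen S (gmul x y).
Proof. by case: (tgen_subgrp S) => _ [h _]; apply: h. Qed.
Lemma tgenV (T : grp) (S : T -> Prop) x : tgen S x -> tgen S (ginv x).
Proof. by case: (tgen_subgrp S) => _ [_ h]; apply: h. Qed.
Lemma tgen_sub (T : grp) (S : T -> Prop) x : S x -> tgen S x.
Proof. by move=> hx H _ hS; apply: hS. Qed.

Lemma tgen_ind (T : grp) (S P : T -> Prop) :
  P (gone T) -> (forall x y, tgen S x -> tgen S y -> P x -> P y -> P (gmul x y)) ->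
  (forall x, tgen S x -> P x -> P (ginv x)) -> (forall y, S y -> P y) ->
  forall x, tgen S x -> P x.
Proof.
move=> h1 hM hV hS x hx.
suff : tgen S x /\ P x by case.
apply: (hx (fun z => tgen S z /\ P z)); last by move=> y hy; split; [apply: tgen_sub|apply: hS].
split; first by split; [apply: tgen1|].
split.
- by move=> a b [ha pa] [hb pb]; split; [apply: tgenM|apply: hM].
- by move=> a [ha pa]; split; [apply: tgenV|apply: hV].
Qed.

Lemma tgen_subgen (T : grp) (S S' : T -> Prop) :
  (forall y, S y -> tgen S' y) -> forall x, tgen S x -> tgen S' x.
Proof.
move=> h; apply: tgen_ind => //; [exact: tgen1| |].
- by move=> x y _ _; apply: tgenM.
- by move=> x _; apply: tgenV.
Qed.

Lemma tgen_mono (T : grp) (S S' : T -> Prop) :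
  (forall y, S y -> S' y) -> forall x, tgen S x -> tgen S' x.
Proof. by move=> h; apply: tgen_subgen => y /h; apply: tgen_sub. Qed.

Lemma tgen_hom (T T' : grp) (h : T -> T') (S : T -> Prop) (S' : T' -> Prop) :
  h (gone T) = gone T' -> (forall x y, h (gmul x y) = gmul (h x) (h y)) ->
  (forall x, h (ginv x) = ginv (h x)) -> (forall y, S y -> tgen S' (h y)) ->
  forall x, tgen S x -> tgen S' (h x).
Proof.
move=> h1 hM hV hS; apply: tgen_ind => //.
- by rewrite h1; apply: tgen1.
- by move=> x y _ _ ? ?; rewrite hM; apply: tgenM.
- by move=> x _ ?; rewrite hV; apply: tgenV.
Qed.

Lemma smulA (G : grp) (x y z : nat -> G) : smul x (smul y z) = smul (smul x y) z.
Proof. by apply: functional_extensionality => t; rewrite /smul gmulA. Qed.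
Lemma smul1 (G : grp) (x : nat -> G) : smul (sone G) x = x.
Proof. by apply: functional_extensionality => t; rewrite /smul /sone gmul1. Qed.
Lemma smulV (G : grp) (x : nat -> G) : smul (sinv x) x = sone G.
Proof. by apply: functional_extensionality => t; rewrite /smul /sinv gmulV. Qed.

Definition Gw (G : grp) : grp := @Grp (nat -> G) (@smul G) (sone G) (@sinv G)
  (@smulA G) (@smul1 G) (@smulV G).

Lemma sgenE (G : grp) (S : (nat -> G) -> Prop) : sgen S = @tgen (Gw G) S.
Proof. by []. Qed.

Lemma iter_shift_app (G : grp) k (f : nat -> G) t : iter k (@shift G) f t = f (t + k)%N.
Proof.
elim: k t => [|k IH] t /=; first by rewrite addn0.
by rewrite /shift IH addSnnS.
Qed.

Lemma iter_shift_smul (G : grp) k (f g : nat -> G) :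
  iter k (@shift G) (smul f g) = smul (iter k (@shift G) f) (iter k (@shift G) g).
Proof. by apply: functional_extensionality => t; rewrite /smul !iter_shift_app. Qed.
Lemma iter_shift_sinv (G : grp) k (f : nat -> G) :
  iter k (@shift G) (sinv f) = sinv (iter k (@shift G) f).
Proof. by apply: functional_extensionality => t; rewrite /sinv !iter_shift_app. Qed.
Lemma iter_shift_sone (G : grp) k : iter k (@shift G) (sone G) = sone G.
Proof. by apply: functional_extensionality => t; rewrite !iter_shift_app. Qed.

Lemma tgen_shift (G : grp) (S S' : (nat -> G) -> Prop) k :
  (forall y, S y -> @tgen (Gw G) S' (iter k (@shift G) y)) ->
  forall x, @tgen (Gw G) S x -> @tgen (Gw G) S' (iter k (@shift G) x).
Proof.
apply: (@tgen_hom (Gw G) (Gw G) (iter k (@shift G)) S S').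
- exact: iter_shift_sone.
- exact: iter_shift_smul.
- exact: iter_shift_sinv.
Qed.

Lemma tgen_shift_closed (G : grp) (S : (nat -> G) -> Prop) :
  (forall y, S y -> S (shift y)) ->
  forall k x, @tgen (Gw G) S x -> @tgen (Gw G) S (iter k (@shift G) x).
Proof.
move=> hS k; apply: tgen_shift => y hy; apply: tgen_sub.
by elim: k => //= k IH; apply: hS.
Qed.

Definition Kgen (G : grp) (K : (nat -> G) -> Prop) m :=
  fun h => exists i, (i <= m)%N /\ exists f, K f /\ h = iter i (@shift G) f.

Lemma KupE (G : grp) (K : (nat -> G) -> Prop) m : Kup K m = @tgen (Gw G) (Kgen K m).
Proof. by []. Qed.

Lemma Kup_gen (G : grp) (K : (nat -> G) -> Prop) m i f :
  (i <= m)%N -> K f -> Kup K m (iter i (@shift G) f).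
Proof. by move=> hi hf; rewrite KupE; apply: tgen_sub; exists i; split => //; exists f. Qed.

Lemma Kup_mono (G : grp) (K : (nat -> G) -> Prop) m m' x :
  (m <= m')%N -> Kup K m x -> Kup K m' x.
Proof.
move=> hm; rewrite !KupE; apply: tgen_mono => y [i [hi hy]]; exists i; split => //.
exact: leq_trans hi hm.
Qed.

Lemma Kup_shift (G : grp) (K : (nat -> G) -> Prop) m E x :
  Kup K m x -> Kup K (m + E) (iter E (@shift G) x).
Proof.
rewrite !KupE; apply: tgen_shift => y [i [hi [f [hf ->]]]].
rewrite -iterD; apply: tgen_sub; exists (E + i)%N; split; first by lia.
by exists f.
Qed.

Lemma cyc_self (G : grp) (f : nat -> G) : cyc f f.
Proof. by apply: (@tgen_sub (Gw G)). Qed.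

Lemma Kup_self (G : grp) (f : nat -> G) m i : (i <= m)%N -> Kup (cyc f) m (iter i (@shift G) f).
Proof. by move=> hi; apply: Kup_gen => //; apply: cyc_self. Qed.

Lemma Kup_cyc_sub (G : grp) (f z : nat -> G) a m x :
  Kup (cyc f) a z -> Kup (cyc z) m x -> Kup (cyc f) (a + m) x.
Proof.
move=> hz; rewrite [Kup (cyc z) m]KupE; apply: (@tgen_subgen (Gw G)).
move=> y [i [hi [h [hh ->]]]].
apply: (@tgen_shift G (fun y => y = z) (Kgen (cyc f) (a + m)) i); last exact: hh.
move=> y' ->; rewrite -KupE; apply: (@Kup_mono _ _ (a + i)); first by lia.
exact: Kup_shift.
Qed.

Lemma Kup_subgrp (G : grp) (K : (nat -> G) -> Prop) m :
  Kup K m (sone G) /\ (forall x y, Kup K m x -> Kup K m y -> Kup K m (smul x y)) /\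
  (forall x, Kup K m x -> Kup K m (sinv x)).
Proof.
rewrite KupE; split; first exact: (@tgen1 (Gw G)).
split; [exact: (@tgenM (Gw G))|exact: (@tgenV (Gw G))].
Qed.

Lemma smul1r (G : grp) (x : nat -> G) : smul x (sone G) = x.
Proof. exact: (@mulg1 (Gw G) x). Qed.
Lemma smulVr (G : grp) (x : nat -> G) : smul x (sinv x) = sone G.
Proof. exact: (@mulgV (Gw G) x). Qed.
Lemma smulK (G : grp) (x y : nat -> G) : smul (sinv x) (smul x y) = y.
Proof. exact: (@mulKg (Gw G) x y). Qed.
Lemma smulKV (G : grp) (x y : nat -> G) : smul x (smul (sinv x) y) = y.
Proof. exact: (@mulKVg (Gw G) x y). Qed.
Lemma sinvK (G : grp) (x : nat -> G) : sinv (sinv x) = x.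
Proof. exact: (@invgK (Gw G) x). Qed.
Lemma sinvM (G : grp) (x y : nat -> G) : sinv (smul x y) = smul (sinv y) (sinv x).
Proof. exact: (@invM (Gw G) x y). Qed.
Lemma sinv1 (G : grp) : sinv (sone G) = sone G.
Proof. exact: (@inv1 (Gw G)). Qed.

Definition Rec (G : grp) (M : (nat -> G) -> Prop) D (a : nat -> G) :=
  exists w m, Kup (cyc a) D.-1 w /\ M m /\ iter D (@shift G) a = smul w m.

Lemma Rec_step (G : grp) (V : (nat -> G) -> Prop) (a : nat -> G) k D :
  (1 <= k)%N -> (1 <= D)%N ->
  (forall m, V m -> V (smul (sinv (iter D (@shift G) a)) (smul m (iter D (@shift G) a)))) ->
  Rec V D (smul (iter k (@shift G) a) (sinv a)) -> Rec V (D + k) a.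
Proof.
move=> hk hD hn [w [m [hw [hm e]]]].
rewrite iter_shift_smul iter_shift_sinv -iterD in e.
exists (smul w (iter D (@shift G) a)),
  (smul (sinv (iter D (@shift G) a)) (smul m (iter D (@shift G) a))).
split; last split; [|exact: hn|].
- have [h1 [hM _]] := Kup_subgrp (cyc a) (D + k).-1.
  apply: (hM); last by apply: Kup_self; lia.
  have hb : Kup (cyc a) k (smul (iter k (@shift G) a) (sinv a)).
    case: (Kup_subgrp (cyc a) k) => _ [hM' hV]; apply: hM'; first by apply: Kup_self.
    apply: hV.
    by apply: (@Kup_self _ _ k 0).
  by apply: (Kup_mono (m := (k + D.-1)%N)); [lia|apply: Kup_cyc_sub hb hw].
- by rewrite -(smulA w) smulKV smulA -e -smulA smulV smul1r.
Qed.

Lemma Rec_comp (G : grp) (V M : (nat -> G) -> Prop) (f : nat -> G) D E :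
  (1 <= D)%N -> (1 <= E)%N -> Rec V D f ->
  (forall z, V z -> Kup (cyc f) D z -> Rec M E z) -> Rec M (D + E) f.
Proof.
move=> hD hE [w [m [hw [hm e]]]] hz.
have em : m = smul (sinv w) (iter D (@shift G) f) by rewrite e smulK.
have hmK : Kup (cyc f) D m.
  have [_ [hM hV]] := Kup_subgrp (cyc f) D.
  rewrite em; apply: (hM); last exact: Kup_self.
  by apply: hV; apply: (Kup_mono (m := D.-1)) => //; lia.
have [w' [m' [hw' [hm' e']]]] := hz m hm hmK.
exists (smul (iter E (@shift G) w) w'), m'; split; last split => //.
- have [_ [hM _]] := Kup_subgrp (cyc f) (D + E).-1.
  apply: (hM).
    by apply: (Kup_mono (m := (D.-1 + E)%N)); [lia|apply: Kup_shift].
  by apply: (Kup_mono (m := (D + E.-1)%N)); [lia|apply: Kup_cyc_sub hmK hw'].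
- by rewrite addnC iterD e iter_shift_smul e' smulA.
Qed.

Lemma Rec_base (G : grp) (V : (nat -> G) -> Prop) (a : nat -> G) D :
  (1 <= D)%N -> (forall x y, V x -> V y -> V (smul x y)) -> (forall x, V x -> V (sinv x)) ->
  (forall x, V x -> V (iter D (@shift G) x)) -> V a -> Rec V D a.
Proof.
move=> hD hM hV hS ha; exists a, (smul (sinv a) (iter D (@shift G) a)).
split; last split.
- by apply: (@Kup_self _ _ _ 0).
- by apply: (hM); [apply: hV|apply: hS].
- by rewrite smulKV.
Qed.

Lemma Rec_one (G : grp) (f : nat -> G) D :
  (1 <= D)%N -> Rec (fun m => m = sone G) D f -> satisfies_recurrence D f.
Proof. by move=> hD [w [m [hw [-> e]]]]; split => //; rewrite e smul1r. Qed.

Ltac ssimpl := repeat progress rewrite ?sinvM ?sinvK ?sinv1 -?smulA ?smul1 ?smul1r ?smulK ?smulKV ?smulV ?smulVr.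

Definition scomm (G : grp) (x y : nat -> G) := smul (smul (sinv x) (sinv y)) (smul x y).

Lemma scommE (G : grp) (x y : nat -> G) t : scomm x y t = gcomm (x t) (y t).
Proof. by []. Qed.

Lemma scomm_mull (G : grp) (x1 x2 y : nat -> G) :
  scomm (smul x1 x2) y = smul (smul (sinv x2) (smul (scomm x1 y) x2)) (scomm x2 y).
Proof. by rewrite /scomm; ssimpl. Qed.
Lemma scomm_mulr (G : grp) (x y1 y2 : nat -> G) :
  scomm x (smul y1 y2) = smul (scomm x y2) (smul (sinv y2) (smul (scomm x y1) y2)).
Proof. by rewrite /scomm; ssimpl. Qed.
Lemma scomm_invl (G : grp) (x y : nat -> G) :
  scomm (sinv x) y = smul (sinv (sinv x)) (smul (sinv (scomm x y)) (sinv x)).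
Proof. by rewrite /scomm; ssimpl. Qed.
Lemma scomm_invr (G : grp) (x y : nat -> G) :
  scomm x (sinv y) = smul (sinv (sinv y)) (smul (sinv (scomm x y)) (sinv y)).
Proof. by rewrite /scomm; ssimpl. Qed.
Lemma scomm1l (G : grp) (y : nat -> G) : scomm (sone G) y = sone G.
Proof. by rewrite /scomm; ssimpl. Qed.
Lemma scomm1r (G : grp) (x : nat -> G) : scomm x (sone G) = sone G.
Proof. by rewrite /scomm; ssimpl. Qed.
Lemma sconjE (G : grp) (x y : nat -> G) : smul (sinv y) (smul x y) = smul x (scomm x y).
Proof. by rewrite /scomm; ssimpl. Qed.

Lemma gcomm_inv (G : grp) (x y : G) : gcomm x y = ginv (gcomm y x).
Proof. by rewrite /gcomm !invM !invgK -!gmulA. Qed.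
Lemma gcomm1l (G : grp) (y : G) : gcomm (gone G) y = gone G.
Proof. by rewrite /gcomm inv1 !gmul1 gmulV. Qed.
Lemma gcomm1r (G : grp) (x : G) : gcomm x (gone G) = gone G.
Proof. by rewrite /gcomm inv1 !mulg1 gmulV. Qed.

Definition B (n i : nat) := (n.+1 ^ (2 ^ i))%N.

Lemma B_pos n i : (0 < B n i)%N.
Proof. by rewrite /B expn_gt0. Qed.
Lemma B_mono n i i' : (i <= i')%N -> (B n i <= B n i')%N.
Proof. move=> h; apply: leq_pexp2l => //; exact: leq_pexp2l. Qed.
Lemma B_sq n i : (B n i * B n i = B n i.+1)%N.
Proof. by rewrite /B -expnD expnS mul2n -addnn. Qed.

Definition Xg (G : grp) (c n j : nat) (u : nat -> G) : Prop :=
  exists i, (j <= i <= c)%N /\ (forall t, lcs i (u t)) /\ period_at_most (B n i) u.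

Arguments Xg : clear implicits.
Definition W (G : grp) c n j := @tgen (Gw G) (Xg G c n j).
Arguments W : clear implicits.

Lemma period_shift (G : grp) k (u : nat -> G) : period_at_most k u -> period_at_most k (shift u).
Proof. by move=> [q [hq e]]; exists q; split => // t; rewrite /shift e addSn. Qed.

Lemma Xg_shift (G : grp) c n j (u : nat -> G) : Xg G c n j u -> Xg G c n j (shift u).
Proof.
move=> [i [hi [hl hp]]]; exists i; split => //; split; last exact: period_shift.
by move=> t; apply: hl.
Qed.

Lemma Xg_mono (G : grp) c n j j' (u : nat -> G) : (j <= j')%N -> Xg G c n j' u -> Xg G c n j u.
Proof. move=> h [i [hi rest]]; exists i; split => //; lia. Qed.

Lemma W_mono (G : grp) c n j j' x : (j <= j')%N -> W G c n j' x -> W G c n j x.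
Proof. by move=> h; apply: tgen_mono => u; apply: Xg_mono. Qed.

Lemma W_shift (G : grp) c n j k x : W G c n j x -> W G c n j (iter k (@shift G) x).
Proof. by apply: tgen_shift_closed => y; apply: Xg_shift. Qed.

Lemma W1 (G : grp) c n j : W G c n j (sone G).
Proof. exact: (@tgen1 (Gw G)). Qed.
Lemma WM (G : grp) c n j x y : W G c n j x -> W G c n j y -> W G c n j (smul x y).
Proof. exact: (@tgenM (Gw G)). Qed.
Lemma WV (G : grp) c n j x : W G c n j x -> W G c n j (sinv x).
Proof. exact: (@tgenV (Gw G)). Qed.

Lemma period_iter (G : grp) q (u : nat -> G) : (forall t, u t = u (t + q)%N) ->
  forall m t, u t = u (t + q * m)%N.
Proof.
move=> e; elim=> [|m IH] t; first by rewrite muln0 addn0.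
by rewrite IH e mulnS; congr u; lia.
Qed.

Lemma period_scomm (G : grp) a b (u v : nat -> G) :
  period_at_most a u -> period_at_most b v -> period_at_most (a * b) (scomm u v).
Proof.
move=> [q1 [h1 e1]] [q2 [h2 e2]]; exists (q1 * q2)%N; split.
  apply/andP; split; first by rewrite muln_gt0; lia.
  by apply: leq_mul; lia.
move=> t; rewrite !scommE (period_iter e1 q2 t); congr gcomm.
by rewrite (period_iter e2 q1 t) mulnC.
Qed.

Lemma period_at_most_le (G : grp) a b (u : nat -> G) :
  (a <= b)%N -> period_at_most a u -> period_at_most b u.
Proof. by move=> h [q [hq e]]; exists q; split => //; lia. Qed.

Lemma lcs_comm (G : grp) i (x y : G) : lcs i x -> lcs i.+1 (gcomm x y).
Proof. by move=> h; apply: (@tgen_sub G); exists x, y. Qed.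
Lemma lcs_inv (G : grp) i (x : G) : lcs i x -> lcs i (ginv x).
Proof. by case: i => // i; apply: (@tgenV G). Qed.

Lemma gen_scomm (G : grp) c n j (u v : nat -> G) :
  (forall x, lcs c x -> x = gone G) ->
  Xg G c n j u -> Xg G c n 0 v -> W G c n j.+1 (scomm u v).
Proof.
move=> hnil [i [hi [hlu hpu]]] [i' [hi' [hlv hpv]]].
have hper := period_scomm hpu hpv.
case: (leqP i' i) => hii.
- case: (ltnP i c) => hic.
  + apply: (@tgen_sub (Gw G)); exists i.+1; split; first by lia.
    split; first by move=> t; rewrite scommE; apply: lcs_comm.
    rewrite -B_sq; apply: (period_at_most_le _ hper).
    by apply: leq_mul => //; apply: B_mono.
  + have -> : scomm u v = sone G.
      apply: functional_extensionality => t; rewrite scommE.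
      by rewrite (hnil (u t)) ?gcomm1l //; have -> : c = i by lia.
    exact: W1.
- case: (ltnP i' c) => hic.
  + apply: (@tgen_sub (Gw G)); exists i'.+1; split; first by lia.
    split; first by move=> t; rewrite scommE gcomm_inv; apply: lcs_inv; apply: lcs_comm.
    rewrite -B_sq; apply: (period_at_most_le _ hper).
    by apply: leq_mul => //; apply: B_mono; lia.
  + have -> : scomm u v = sone G.
      apply: functional_extensionality => t; rewrite scommE.
      by rewrite (hnil (v t)) ?gcomm1r //; have -> : c = i' by lia.
    exact: W1.
Qed.

Lemma W_top (G : grp) c n x : W G c n c.+1 x -> x = sone G.
Proof.
apply: (@tgen_ind (Gw G) _ (fun x => x = sone G)) => //.
- by move=> a b _ _ -> ->; rewrite /= smul1.
- by move=> a _ ->; rewrite /= sinv1.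
- by move=> u [i [hi _]]; lia.
Qed.

Lemma C_all (G : grp) c n : (forall x, lcs c x -> x = gone G) ->
  forall r j, (j + r = c.+1)%N -> forall x y, W G c n j x -> W G c n 0 y ->
  W G c n j.+1 (scomm x y).
Proof.
move=> hnil; elim=> [|r IH] j hj x y hx hy.
  rewrite addn0 in hj; subst j.
  by rewrite (W_top hx) scomm1l; apply: W1.
have IH' := IH j.+1 ltac:(lia).
have norm : forall x y, W G c n j.+1 x -> W G c n 0 y ->
    W G c n j.+1 (smul (sinv y) (smul x y)).
  move=> a b ha hb; rewrite sconjE; apply: WM => //.
  by apply: (@W_mono _ _ _ _ j.+2) => //; apply: IH'.
move: x hx y hy; apply: (@tgen_ind (Gw G) _ (fun x => forall y, W G c n 0 y -> W G c n j.+1 (scomm x y))).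
- by move=> y _; rewrite scomm1l; apply: W1.
- move=> x1 x2 h1 h2 P1 P2 y hy; rewrite scomm_mull; apply: WM; last exact: P2.
  by apply: norm; [apply: P1|apply: (@W_mono _ _ _ 0 j)].
- move=> x hx P y hy; rewrite scomm_invl; apply: norm; first by apply: WV; apply: P.
  by apply: WV; apply: (@W_mono _ _ _ 0 j).
- move=> u hu; apply: (@tgen_ind (Gw G) _ (fun y => W G c n j.+1 (scomm u y))).
  + by rewrite scomm1r; apply: W1.
  + move=> y1 y2 h1 h2 P1 P2; rewrite scomm_mulr; apply: WM => //.
    by apply: norm.
  + by move=> y hy P; rewrite scomm_invr; apply: norm; [apply: WV|apply: WV].
  + by move=> v hv; apply: gen_scomm.
Qed.

Lemma C_le (G : grp) c n : (forall x, lcs c x -> x = gone G) ->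
  forall j, (j <= c.+1)%N -> forall x y, W G c n j x -> W G c n 0 y ->
  W G c n j.+1 (scomm x y).
Proof. by move=> hnil j hj; apply: (C_all hnil (r := (c.+1 - j)%N)); lia. Qed.

Definition Lk (G : grp) j k (u : nat -> G) := (forall t, lcs j (u t)) /\ period_at_most k u.
Arguments Lk : clear implicits.
Definition Y (G : grp) c n j k := @tgen (Gw G) (fun u => Xg G c n j.+1 u \/ Lk G j k u).
Arguments Y : clear implicits.

Lemma Y1 (G : grp) c n j k : Y G c n j k (sone G).
Proof. exact: (@tgen1 (Gw G)). Qed.
Lemma YM (G : grp) c n j k x y : Y G c n j k x -> Y G c n j k y -> Y G c n j k (smul x y).
Proof. exact: (@tgenM (Gw G)). Qed.
Lemma YV (G : grp) c n j k x : Y G c n j k x -> Y G c n j k (sinv x).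
Proof. exact: (@tgenV (Gw G)). Qed.

Lemma Y_shift (G : grp) c n j k m x : Y G c n j k x -> Y G c n j k (iter m (@shift G) x).
Proof.
apply: tgen_shift_closed => y [hy|[hl hp]]; first by left; apply: Xg_shift.
by right; split; [move=> t; apply: hl|apply: period_shift].
Qed.

Lemma Y_of_W (G : grp) c n j k x : W G c n j.+1 x -> Y G c n j k x.
Proof. by apply: tgen_mono => u hu; left. Qed.

Lemma Y_sub_W (G : grp) c n j k x : (j <= c)%N -> (k <= B n j)%N -> Y G c n j k x -> W G c n j x.
Proof.
move=> hj hk; apply: tgen_mono => u [hu|[hl hp]]; first by apply: (Xg_mono (j' := j.+1)).
exists j; split; first by lia.
by split => //; apply: period_at_most_le hp.
Qed.

Lemma Y0_sub (G : grp) c n j x : Y G c n j 0 x -> W G c n j.+1 x.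
Proof.
apply: tgen_subgen => u [hu|[_ [q [hq _]]]]; first by apply: (@tgen_sub (Gw G)).
by lia.
Qed.

Lemma W_sub_Y (G : grp) c n j x : W G c n j x -> Y G c n j (B n j) x.
Proof.
apply: tgen_mono => u [i [hi [hl hp]]].
case: (ltnP j i) => h.
  by left; exists i; split => //; lia.
have ei : i = j by lia.
by subst i; right.
Qed.

Lemma Y_norm (G : grp) c n j k b x :
  (forall x y, W G c n j x -> W G c n 0 y -> W G c n j.+1 (scomm x y)) ->
  (j <= c)%N -> (k <= B n j)%N -> Y G c n j k b -> W G c n 0 x ->
  Y G c n j k (smul (sinv x) (smul b x)).
Proof.
move=> hC hj hk hb hx; rewrite sconjE; apply: YM => //.
by apply: Y_of_W; apply: hC => //; apply: (Y_sub_W hj hk).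
Qed.

Lemma Phi (G : grp) c n j k :
  (forall x y, W G c n j x -> W G c n 0 y -> W G c n j.+1 (scomm x y)) ->
  (j <= c)%N -> (1 <= k <= B n j)%N ->
  forall a, Y G c n j k a -> Y G c n j k.-1 (smul (iter k (@shift G) a) (sinv a)).
Proof.
move=> hC hj /andP [hk1 hk2].
have hk' : (k.-1 <= B n j)%N by lia.
apply: (@tgen_ind (Gw G) _ (fun a => Y G c n j k.-1 (smul (iter k (@shift G) a) (sinv a)))).
- by rewrite iter_shift_sone sinv1 smul1; apply: Y1.
- move=> x y hx hy Px Py.
  have -> : smul (iter k (@shift G) (smul x y)) (sinv (smul x y)) =
     smul (smul (iter k (@shift G) x) (sinv x))
       (smul (sinv (sinv x)) (smul (smul (iter k (@shift G) y) (sinv y)) (sinv x))).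
    by rewrite iter_shift_smul; ssimpl.
  apply: YM => //; apply: Y_norm => //.
  by apply: WV; apply: (@W_mono _ _ _ 0 j) => //; apply: (Y_sub_W hj hk2).
- move=> x hx Px.
  have -> : smul (iter k (@shift G) (sinv x)) (sinv (sinv x)) =
     smul (sinv x) (smul (sinv (smul (iter k (@shift G) x) (sinv x))) x).
    by rewrite iter_shift_sinv; ssimpl.
  apply: Y_norm => //; first by apply: YV.
  by apply: (@W_mono _ _ _ 0 j) => //; apply: (Y_sub_W hj hk2).
- move=> u [hu|[hl [q [hq e]]]].
    apply: Y_of_W; apply: WM; first by apply: W_shift; apply: (@tgen_sub (Gw G)).
    by apply: WV; apply: (@tgen_sub (Gw G)).
  case: (ltnP q k) => hqk.
    have hu : Y G c n j k.-1 u.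
      by apply: (@tgen_sub (Gw G)); right; split => //; exists q; split => //; lia.
    by apply: YM; [apply: Y_shift|apply: YV].
  have -> : iter k (@shift G) u = u.
    apply: functional_extensionality => t; rewrite iter_shift_app.
    by have -> : k = q by lia.
  by rewrite smulVr; apply: Y1.
Qed.

Lemma LC (G : grp) c n j : (forall x, lcs c x -> x = gone G) -> (j <= c)%N ->
  forall k, (k <= B n j)%N -> forall a, Y G c n j k a ->
  forall D, (1 + k * k <= D)%N -> Rec (W G c n j.+1) D a.
Proof.
move=> hnil hj; have hC := C_le (n := n) hnil.
elim=> [|k IH] hk a ha D hD.
  apply: Rec_base; [lia|exact: WM|exact: WV|move=> x; exact: W_shift|].
  exact: Y0_sub.
have hkk : (1 <= k.+1 <= B n j)%N by apply/andP; split.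
have hb := Phi (hC j ltac:(lia)) hj hkk ha.
have hD' : (1 + k * k <= D - k.+1)%N by nia.
have := IH ltac:(lia) _ hb _ hD'.
move/(Rec_step (k := k.+1)) => h.
have := h ltac:(lia) ltac:(lia); rewrite subnK; last by nia.
apply => m hm; rewrite sconjE; apply: WM => //.
apply: (@W_mono _ _ _ _ j.+2) => //; apply: (hC j.+1); [lia|exact: hm|].
by apply: W_shift; apply: (@W_mono _ _ _ 0 j) => //; apply: (Y_sub_W hj hk).
Qed.

Lemma LC' (G : grp) c n j : (forall x, lcs c x -> x = gone G) -> (j <= c)%N ->
  forall a, W G c n j a -> forall D, (1 + B n j * B n j <= D)%N -> Rec (W G c n j.+1) D a.
Proof. by move=> hnil hj a ha; apply: (LC hnil hj (leqnn _)); apply: W_sub_Y. Qed.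

Lemma Tower (G : grp) c n : (forall x, lcs c x -> x = gone G) ->
  forall r j, (j + r = c.+1)%N -> forall a, W G c n j a ->
  forall D, (r.+1 * (1 + B n c * B n c) <= D)%N -> Rec (fun m => m = sone G) D a.
Proof.
move=> hnil; set beta := (1 + B n c * B n c)%N.
have hb1 : (1 <= beta)%N by rewrite /beta; lia.
elim=> [|r IH] j hj a ha D hD.
  rewrite addn0 in hj; subst j; rewrite (W_top ha).
  apply: Rec_base; first by rewrite mul1n in hD; lia.
  - by move=> x y -> ->; rewrite smul1.
  - by move=> x ->; rewrite sinv1.
  - by move=> x ->; rewrite iter_shift_sone.
  - by [].
have hj' : (j <= c)%N by lia.
have hbr : (r.+1 * beta <= D - beta)%N by rewrite mulSn in hD; lia.
have hbr1 : (1 <= D - beta)%N by apply: leq_trans hbr; rewrite muln_gt0; lia.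
have -> : D = (beta + (D - beta))%N by rewrite mulSn in hD; lia.
apply: (Rec_comp (V := W G c n j.+1)) => //.
  apply: (LC' hnil hj' ha); rewrite /beta leq_add2l.
  by apply: leq_mul; apply: B_mono.
by move=> z hz _; apply: (IH j.+1) => //; lia.
Qed.

Import GRing.Theory.
Local Open Scope ring_scope.

Theorem mainTheorem12 (G : grp) :
  finitely_generated G -> nilpotent G ->
  exists p : {poly rat}, forall (n : nat) (f : nat -> G),
    Gomega n f ->
    exists d : nat, p.[n%:R] = d%:R /\ satisfies_recurrence d f.
Proof.
move=> _ [c hnil].
exists ((1 + ('X + 1) ^+ (2 ^ c.+1)) *+ c.+2) => n f hf.
exists (c.+2 * (1 + n.+1 ^ (2 ^ c.+1)))%N; split.
  by rewrite hornerMn !hornerE natr1 natrM natrD natrX mulr_natl.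
have hb : (1 + B n c * B n c = 1 + n.+1 ^ (2 ^ c.+1))%N by rewrite B_sq.

apply: (@Rec_one G f (c.+2 * (1 + n.+1 ^ (2 ^ c.+1)))%N); first by rewrite muln_gt0 /= addn_gt0.
have hW : W G c n 0 f.
  move: hf; apply: (@tgen_mono (Gw G) (period_at_most n) (Xg G c n 0)) => u hu; exists 0%N; split => //; split => //.
  by apply: (period_at_most_le _ hu); rewrite /B expn1.
apply: (Tower hnil (r := c.+1) (j := 0) _ hW).
  by [].
by rewrite hb.
Qed.
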